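(* Let $P$ be a finite lattice. The image of the characteristic map $\chi\colon \mathrm{Tr}(P)\to \mathrm{End}(P)$, $R\mapsto\chi^R$, is exactly the set $\mathrm{End}^\circ(P)$ of interior operators on $P$.
   Context: For a finite lattice $(P,\le)$, a transfer system on $P$ is a partial order $R$ on $P$ refining $\le$ (i.e. $x\,R\,y\Rightarrow x\le y$) that is closed under restriction: if $x\,R\,z$ and $y\le z$ then $(x\wedge y)\,R\,y$. $\mathrm{Tr}(P)$ is the set of transfer systems on $P$ ordered by inclusion of relations. For $R\in\mathrm{Tr}(P)$ and $x\in P$, the set $\{y\in P: y\,R\,x\}$ has a least element, and the characteristic function $\chi^R\colon P\to P$ sends $x$ to this least element. $\mathrm{End}(P)$ is the set of monotone maps $P\to P$ with the pointwise order. An interior operator is a monotone $f\colon P\to P$ with $f(x)\le x$ and $f(f(x))=f(x)$ for all $x$; $\mathrm{End}^\circ(P)\subseteq\mathrm{End}(P)$ is the set of interior operators. *)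

(* Defs.v *)
From mathcomp Require Import all_boot all_order.
Set Implicit Arguments. Unset Strict Implicit. Unset Printing Implicit Defensive.
Import Order.TTheory.
Local Open Scope order_scope.

Definition transfer_system (d : Order.disp_t) (P : finLatticeType d) (R : rel P) : Prop :=
  [/\ reflexive R, antisymmetric R, transitive R,
      (forall x y, R x y -> x <= y) &
      (forall x y z, R x z -> y <= z -> R (x `&` y) y)].

Definition is_least (d : Order.disp_t) (P : finLatticeType d) (S : pred P) (m : P) : Prop :=
  S m /\ (forall y, S y -> m <= y).

Definition is_chi (d : Order.disp_t) (P : finLatticeType d) (R : rel P) (f : P -> P) : Prop :=
  forall x, is_least (fun y => R y x) (f x).

Definition monotone_map (d : Order.disp_t) (P : finLatticeType d) (f : P -> P) : Prop :=
  {homo f : x y / x <= y}.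

Definition interior_operator (d : Order.disp_t) (P : finLatticeType d) (f : P -> P) : Prop :=
  [/\ monotone_map f, (forall x, f x <= x) & (forall x, f (f x) = f x)].

(* Main.v *)
Require Import Defs.
From mathcomp Require Import all_boot all_order.
Import Order.TTheory.
Local Open Scope order_scope.

Theorem theorem2p7 (d : Order.disp_t) (P : finLatticeType d) (f : P -> P) :
  (exists R : rel P, transfer_system R /\ is_chi R f) <-> interior_operator f.
Proof.
split.
- move=> [R [[Rr Ra Rt Rle Rres] Hc]].
  have Hle : forall x, f x <= x by move=> x; apply: Rle; exact: (Hc x).1.
  split.
  + move=> x y xy.
    have H1 := Rres _ _ _ (Hc y).1 xy.
    have H2 := (Hc x).2 _ H1.
    apply: le_trans H2 _; exact: leIl.
  + exact: Hle.
  + move=> x; apply/eqP; rewrite eq_le Hle /=.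
    apply: (Hc x).2; exact: Rt (Hc (f x)).1 (Hc x).1.
- move=> [Hm Hle Hid].
  exists (fun x y => (x <= y) && (f y <= x)); split; last first.
    move=> x; split; first by rewrite /= Hle lexx.
    by move=> y /andP [].
  split.
  + by move=> x; rewrite lexx Hle.
  + move=> x y /andP [/andP [xy _] /andP [yx _]]; by apply/eqP; rewrite eq_le xy yx.
  + move=> y x z /andP [xy fyx] /andP [yz fzy]; rewrite (le_trans xy yz) /=.
    rewrite -Hid; apply: le_trans fyx; exact: Hm.
  + by move=> x y /andP [].
  + move=> x y z /andP [xz fzx] yz; rewrite leIr /= lexI Hle andbT.
    exact: le_trans (Hm _ _ yz) fzx.
Qed.
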